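(* The set theory $\mathsf{AST}+\mathsf{EXT}$ is interpretable in $\mathsf{Seq}^+$, and thus also in $\mathsf{Seq}$.
   Context: $\mathsf{Seq}$ is the theory in the language $\{e,\vdash,\circ\}$ ($e$ constant, $\vdash$ and $\circ$ binary functions) with axioms: ($\mathsf{Seq}_1$) $\forall xy[x\vdash y\neq e]$; ($\mathsf{Seq}_2$) $\forall x_1x_2y_1y_2[x_1\vdash x_2=y_1\vdash y_2\rightarrow(x_1=y_1\wedge x_2=y_2)]$; ($\mathsf{Seq}_3$) $\forall x[x\circ e=x]$; ($\mathsf{Seq}_4$) $\forall xyz[x\circ(y\vdash z)=(x\circ y)\vdash z]$; ($\mathsf{Seq}_5$) $\forall x[x=e\vee\exists yz[x=y\vdash z]]$. $\mathsf{Seq}^+$ extends $\mathsf{Seq}$ by ($\mathsf{Seq}^*_3$) $\forall x[x\circ e=x\wedge e\circ x=x]$, ($\mathsf{Seq}^*_5$) $\forall xyzw[x\circ y=z\circ w\leftrightarrow\exists u[(z=x\circ u\wedge u\circ w=y)\vee(x=z\circ u\wedge u\circ y=w)]]$, and ($\mathsf{Seq}^+_c$) $\forall xyz[(x\circ y=x\circ z\vee y\circ x=z\circ x)\rightarrow y=z]$. $\mathsf{AST}+\mathsf{EXT}$ is the theory in the language $\{\in\}$ with axioms $\exists y\forall x[x\notin y]$ (empty set), $\forall xy\exists z\forall u[u\in z\leftrightarrow(u\in x\vee u=y)]$ (adjunction), and $\forall xy[\forall z[z\in x\leftrightarrow z\in y]\rightarrow x=y]$ (extensionality). *)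

(* Defs.v *)
Record SeqStr := {
  car :> Type;
  se : car;
  sturn : car -> car -> car;
  scirc : car -> car -> car
}.

(** Terms and formulas of the language {e, ⊢, ∘} (de Bruijn variables). *)
Inductive term : Type :=
| tvar : nat -> term
| te : term
| tturn : term -> term -> term
| tcirc : term -> term -> term.

Inductive form : Type :=
| fbot : form
| feq : term -> term -> form
| fnot : form -> form
| fand : form -> form -> form
| for_ : form -> form -> form
| fimp : form -> form -> form
| fall : form -> form
| fex : form -> form.

Definition scons {A : Type} (a : A) (rho : nat -> A) : nat -> A :=
  fun n => match n with 0 => a | S k => rho k end.

Fixpoint eval (M : SeqStr) (rho : nat -> M) (t : term) : M :=
  match t with
  | tvar n => rho n
  | te => se M
  | tturn t u => sturn M (eval M rho t) (eval M rho u)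
  | tcirc t u => scirc M (eval M rho t) (eval M rho u)
  end.

Fixpoint sat (M : SeqStr) (rho : nat -> M) (phi : form) : Prop :=
  match phi with
  | fbot => False
  | feq t u => eval M rho t = eval M rho u
  | fnot p => ~ sat M rho p
  | fand p q => sat M rho p /\ sat M rho q
  | for_ p q => sat M rho p \/ sat M rho q
  | fimp p q => sat M rho p -> sat M rho q
  | fall p => forall a : M, sat M (scons a rho) p
  | fex p => exists a : M, sat M (scons a rho) p
  end.

(** Parameter-free environment: variables 0 and 1 are x and y; all other
    variables are (harmlessly) set to the constant e. *)
Definition env2 (M : SeqStr) (x y : M) : nat -> M :=
  fun n => match n with 0 => x | 1 => y | _ => se M end.

Definition Seq_model (M : SeqStr) : Prop :=
  (forall x y : M, sturn M x y <> se M) /\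
  (forall x1 x2 y1 y2 : M, sturn M x1 x2 = sturn M y1 y2 -> x1 = y1 /\ x2 = y2) /\
  (forall x : M, scirc M x (se M) = x) /\
  (forall x y z : M, scirc M x (sturn M y z) = sturn M (scirc M x y) z) /\
  (forall x : M, x = se M \/ exists y z : M, x = sturn M y z).

Definition SeqPlus_model (M : SeqStr) : Prop :=
  Seq_model M /\
  (forall x : M, scirc M x (se M) = x /\ scirc M (se M) x = x) /\
  (forall x y z w : M,
      scirc M x y = scirc M z w <->
      exists u : M, (z = scirc M x u /\ scirc M u w = y) \/
                    (x = scirc M z u /\ scirc M u y = w)) /\
  (forall x y z : M,
      (scirc M x y = scirc M x z \/ scirc M y x = scirc M z x) -> y = z).

(** The axioms of AST+EXT, together with the axioms of identity, hold in the
    structure (D, In) with identity interpreted by Eq, all quantifiers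
    relativized to D. *)
Definition AST_EXT_holds {A : Type} (D : A -> Prop) (Eq In : A -> A -> Prop)
  : Prop :=
  (exists x, D x) /\
  (forall x, D x -> Eq x x) /\
  (forall x y, D x -> D y -> Eq x y -> Eq y x) /\
  (forall x y z, D x -> D y -> D z -> Eq x y -> Eq y z -> Eq x z) /\
  (forall x x' y y', D x -> D x' -> D y -> D y' ->
      Eq x x' -> Eq y y' -> In x y -> In x' y') /\
  (exists y, D y /\ forall x, D x -> ~ In x y) /\
  (forall x y, D x -> D y ->
      exists z, D z /\ forall u, D u -> (In u z <-> (In u x \/ Eq u y))) /\
  (forall x y, D x -> D y ->
      (forall z, D z -> (In z x <-> In z y)) -> Eq x y).

(** AST+EXT is interpretable in the theory whose models are those satisfying
    [T]: there are a domain formula delta(x), and formulas eps_eq(x,y),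
    eps_in(x,y) of the language {e, ⊢, ∘} (translating = and ∈) such that in
    every model of T the translations of all axioms of AST+EXT (and of the
    identity axioms) hold, i.e. T proves them (semantic consequence). *)
Definition AST_EXT_interpretable_in (T : SeqStr -> Prop) : Prop :=
  exists delta eps_eq eps_in : form,
    forall M : SeqStr, T M ->
      AST_EXT_holds
        (fun x : M => sat M (env2 M x x) delta)
        (fun x y : M => sat M (env2 M x y) eps_eq)
        (fun x y : M => sat M (env2 M x y) eps_in).

(* Main.v *)
Require Import Defs.
From Stdlib Require Import Classical Setoid Morphisms.

Definition ent (M : SeqStr) (u x : M) : Prop :=
  exists a b : M, x = scirc M (sturn M a u) b.
Definition pr (M:SeqStr) (a b : M) : M := sturn M (sturn M (se M) a) b.
Definition inR (M : SeqStr) (p q R : M) := ent M (pr M p q) R \/ ent M (pr M q p) R.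
Definition comp (M : SeqStr) (a R : M) := exists b, inR M a b R.
Definition Isc (M : SeqStr) (y:M) := forall w x : M, scirc M (scirc M w x) y = scirc M w (scirc M x y).
Definition Jsc (M : SeqStr) (y:M) := forall x u : M, ent M u (scirc M x y) <-> ent M u x \/ ent M u y.
Definition Kc (M : SeqStr) (y:M) := Isc M y /\ Jsc M y.
Definition SatR (M : SeqStr) (R S : M) := forall p q, inR M p q R -> (ent M p S <-> ent M q S).
Definition sim (M : SeqStr) (R a b : M) := forall S, SatR M R S -> (ent M a S <-> ent M b S).
Definition Bis (M : SeqStr) (R:M) := forall p q, inR M p q R -> forall v, ent M v p -> exists w, ent M w q /\ sim M R v w.
Definition Fc (M : SeqStr) (R:M) := forall v R0 : M, exists S, Kc M S /\ forall a, ent M a S <-> (comp M a R /\ exists w, ent M w a /\ sim M R0 v w).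
Definition Wc (M : SeqStr) (R:M) := Kc M R /\ Fc M R.
Definition EqS (M : SeqStr) (x y : M) := exists R, Wc M R /\ Bis M R /\ sim M R x y.
Definition Psi (M : SeqStr) (x:M) := forall y, (forall v, ent M v x -> exists w, ent M w y /\ EqS M v w) -> exists R, Wc M R /\ Bis M R /\ forall v, ent M v x -> exists w, ent M w y /\ sim M R v w.
Definition Dm (M : SeqStr) (x:M) := exists T, Kc M T /\ ent M x T /\ forall a, ent M a T -> Psi M a /\ forall u, ent M u a -> ent M u T.
Definition InS (M : SeqStr) (u x : M) := exists v, ent M v x /\ EqS M u v.

Lemma ent_e (M : SeqStr) (HM : Seq_model M) u : ~ ent M u (se M).
Proof.
  destruct HM as [H1 [H2 [H3 [H4 H5]]]].
  intros [a [b Hb]]. destruct (H5 b) as [->|[c [d ->]]].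
  - rewrite H3 in Hb. symmetry in Hb. eapply H1; eauto.
  - rewrite H4 in Hb. symmetry in Hb. eapply H1; eauto.
Qed.

Lemma ent_turn (M : SeqStr) (HM : Seq_model M) u x y : ent M u (sturn M x y) <-> ent M u x \/ u = y.
Proof.
  destruct HM as [H1 [H2 [H3 [H4 H5]]]].
  split.
  - intros [a [b Hb]]. destruct (H5 b) as [->|[c [d ->]]].
    + rewrite H3 in Hb. apply H2 in Hb. right; destruct Hb; congruence.
    + rewrite H4 in Hb. apply H2 in Hb. left. exists a, c. tauto.
  - intros [[a [b Hb]]| ->].
    + exists a, (sturn M b y). rewrite H4. congruence.
    + exists x, (se M). rewrite H3. reflexivity.
Qed.

Lemma pr_inj (M : SeqStr) (HM : Seq_model M) a b c d : pr M a b = pr M c d -> a = c /\ b = d.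
Proof.
  destruct HM as [H1 [H2 _]]. unfold pr. intros H. apply H2 in H. destruct H as [H H'].
  apply H2 in H. tauto.
Qed.

Lemma K_e (M : SeqStr) (HM : Seq_model M) : Kc M (se M).
Proof.
  pose proof (ent_e M HM) as He.
  destruct HM as [H1 [H2 [H3 [H4 H5]]]]. split.
  - intros w x. rewrite !H3. reflexivity.
  - intros x u. rewrite H3. split; [tauto|]. intros [h|h]; [tauto| destruct (He u h)].
Qed.

Lemma K_turn (M : SeqStr) (HM : Seq_model M) y z : Kc M y -> Kc M (sturn M y z).
Proof.
  intros [HI HJ]. unfold Isc, Jsc in *. pose proof (ent_turn M HM) as Ht.
  destruct HM as [H1 [H2 [H3 [H4 H5]]]]. split.
  - intros w x. rewrite !H4, HI. reflexivity.
  - intros x u. rewrite H4, !Ht, HJ. tauto.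
Qed.

Lemma K_circ (M : SeqStr) (HM : Seq_model M) y1 y2 : Kc M y1 -> Kc M y2 -> Kc M (scirc M y1 y2).
Proof.
  intros [I1 J1] [I2 J2]. unfold Isc, Jsc in *. split.
  - intros w x.
    rewrite <- (I2 (scirc M w x) y1), (I1 w x), (I2 w (scirc M x y1)), (I2 x y1). reflexivity.
  - intros x u. rewrite <- (I2 x y1), J2, J1, J2. tauto.
Qed.

Lemma inR_turn (M : SeqStr) (HM : Seq_model M) p q R c :
  inR M p q (sturn M R c) <-> inR M p q R \/ c = pr M p q \/ c = pr M q p.
Proof. unfold inR. rewrite !ent_turn by exact HM. intuition congruence. Qed.

Lemma inR_circ (M : SeqStr) (R1 R2 : M) p q : Jsc M R2 ->
  inR M p q (scirc M R1 R2) <-> inR M p q R1 \/ inR M p q R2.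
Proof. intros J. unfold Jsc in J. unfold inR. rewrite !J. tauto. Qed.

Lemma inR_e (M : SeqStr) (HM : Seq_model M) p q : ~ inR M p q (se M).
Proof. unfold inR. pose proof (ent_e M HM). firstorder. Qed.

Lemma inR_sym (M : SeqStr) p q R : inR M p q R -> inR M q p R.
Proof. unfold inR; tauto. Qed.

Lemma sim_refl (M : SeqStr) R a : sim M R a a.
Proof. intros S _. tauto. Qed.
Lemma sim_sym (M : SeqStr) R a b : sim M R a b -> sim M R b a.
Proof. intros H S HS. specialize (H S HS). tauto. Qed.
Lemma sim_trans (M : SeqStr) R a b c : sim M R a b -> sim M R b c -> sim M R a c.
Proof. intros H H' S HS. specialize (H S HS). specialize (H' S HS). tauto. Qed.
Lemma sim_mono (M : SeqStr) (R1 R2 a b : M) : (forall p q, inR M p q R1 -> inR M p q R2) -> sim M R1 a b -> sim M R2 a b.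
Proof. intros Hi H S HS. apply H. intros p q Hpq. apply HS, Hi, Hpq. Qed.
Lemma sim_inR (M : SeqStr) (R a b : M) : inR M a b R -> sim M R a b.
Proof. intros H S HS. apply HS, H. Qed.

Lemma sim_circ_l (M : SeqStr) (R1 R2 a b : M) : Jsc M R2 -> sim M R1 a b -> sim M (scirc M R1 R2) a b.
Proof. intros J. apply sim_mono. intros p q h. apply (inR_circ M R1 R2 p q J). auto. Qed.
Lemma sim_circ_r (M : SeqStr) (R1 R2 a b : M) : Jsc M R2 -> sim M R2 a b -> sim M (scirc M R1 R2) a b.
Proof. intros J. apply sim_mono. intros p q h. apply (inR_circ M R1 R2 p q J). auto. Qed.

Lemma F_e (M : SeqStr) (HM : Seq_model M) : Fc M (se M).
Proof.
  intros v R0. exists (se M). split; [apply K_e; exact HM|].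
  intros a. split.
  - intros h. destruct (ent_e M HM a h).
  - intros [[b h] _]. destruct (inR_e M HM a b h).
Qed.

Lemma F_turn (M : SeqStr) (HM : Seq_model M) R c : Fc M R -> Fc M (sturn M R c).
Proof.
  intros HF v R0. destruct (HF v R0) as [S [HK HS]].
  set (P := fun a : M => exists w, ent M w a /\ sim M R0 v w).
  destruct (classic (exists a b, c = pr M a b)) as [[a [b ->]] | Hn].
  - assert (Hstep : forall (S0 : M) (a0 : M), Kc M S0 -> exists S1, Kc M S1 /\
        forall x, ent M x S1 <-> ent M x S0 \/ (x = a0 /\ P a0)).
    { intros S0 a0 HK0. destruct (classic (P a0)) as [Hp|Hp].
      - exists (sturn M S0 a0). split; [apply K_turn; auto|].
        intros x. rewrite ent_turn by exact HM. intuition congruence.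
      - exists S0. split; auto. intros x. intuition congruence. }
    destruct (Hstep S a HK) as [S1 [HK1 HS1]].
    destruct (Hstep S1 b HK1) as [S2 [HK2 HS2]].
    exists S2. split; auto. intros x. rewrite HS2, HS1, HS.
    unfold comp. setoid_rewrite inR_turn; [|exact HM].
    split.
    + intros [[[H1 H2]|[-> H2]]|[-> H2]]; split; auto.
      * destruct H1 as [y Hy]. exists y; auto.
      * exists b. right. left. reflexivity.
      * exists a. right. right. reflexivity.
    + intros [[y [Hy|[Hy|Hy]]] H2].
      * left. left. split; auto. exists y; auto.
      * apply pr_inj in Hy; [|exact HM]. destruct Hy as [-> ->]. left; right; auto.
      * apply pr_inj in Hy; [|exact HM]. destruct Hy as [-> ->]. right; auto.
  - exists S. split; auto. intros x. rewrite HS. unfold comp.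
    setoid_rewrite inR_turn; [|exact HM].
    split.
    + intros [[y Hy] H]. split; auto. exists y; auto.
    + intros [[y [Hy|[Hy|Hy]]] H]; split; auto.
      * exists y; auto.
      * exfalso; apply Hn; eauto.
      * exfalso; apply Hn; eauto.
Qed.

Lemma F_circ (M : SeqStr) (HM : Seq_model M) R1 R2 : Fc M R1 -> Fc M R2 -> Jsc M R2 -> Fc M (scirc M R1 R2).
Proof.
  intros F1 F2 J v R0. destruct (F1 v R0) as [S1 [K1 HS1]]. destruct (F2 v R0) as [S2 [K2 HS2]].
  exists (scirc M S1 S2). split; [apply K_circ; auto|].
  intros a. destruct K2 as [_ J2]. unfold Jsc in J2. rewrite J2, HS1, HS2. unfold comp.
  setoid_rewrite inR_circ; [|exact J]. split.
  - intros [[h1 h2]|[h1 h2]]; split; auto; destruct h1 as [b hb]; exists b; auto.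
  - intros [[b [hb|hb]] h2]; [left|right]; split; auto; exists b; auto.
Qed.

Lemma W_e (M : SeqStr) (HM : Seq_model M) : Wc M (se M).
Proof. split; [apply K_e|apply F_e]; auto. Qed.
Lemma W_turn (M : SeqStr) (HM : Seq_model M) R c : Wc M R -> Wc M (sturn M R c).
Proof. intros [K F]. split; [apply K_turn|apply F_turn]; auto. Qed.
Lemma W_circ (M : SeqStr) (HM : Seq_model M) R1 R2 : Wc M R1 -> Wc M R2 -> Wc M (scirc M R1 R2).
Proof. intros [K1 F1] [K2 F2]. split; [apply K_circ|apply F_circ]; auto. apply K2. Qed.

Lemma Bis_e (M : SeqStr) (HM : Seq_model M) : Bis M (se M).
Proof. intros p q H. destruct (inR_e M HM p q H). Qed.

Lemma Bis_circ (M : SeqStr) (R1 R2 : M) : Jsc M R2 -> Bis M R1 -> Bis M R2 -> Bis M (scirc M R1 R2).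
Proof.
  intros J B1 B2 p q H v Hv. apply (inR_circ M R1 R2 p q J) in H.
  assert (m1 : forall p q, inR M p q R1 -> inR M p q (scirc M R1 R2)).
  { intros; apply inR_circ; auto. }
  assert (m2 : forall p q, inR M p q R2 -> inR M p q (scirc M R1 R2)).
  { intros; apply inR_circ; auto. }
  destruct H as [H|H].
  - destruct (B1 p q H v Hv) as [w [Hw Hs]]. exists w. split; auto. exact (sim_mono M R1 _ v w m1 Hs).
  - destruct (B2 p q H v Hv) as [w [Hw Hs]]. exists w. split; auto. exact (sim_mono M R2 _ v w m2 Hs).
Qed.

Lemma Eq_refl (M : SeqStr) (HM : Seq_model M) x : EqS M x x.
Proof. exists (se M). split; [apply W_e; auto|]. split; [apply Bis_e; auto| apply sim_refl]. Qed.
Lemma Eq_sym (M : SeqStr) x y : EqS M x y -> EqS M y x.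
Proof. intros [R [W [B S]]]. exists R. split; auto. split; auto. apply sim_sym; auto. Qed.
Lemma Eq_trans (M : SeqStr) (HM : Seq_model M) x y z : EqS M x y -> EqS M y z -> EqS M x z.
Proof.
  intros [R1 [W1 [B1 S1]]] [R2 [W2 [B2 S2]]].
  exists (scirc M R1 R2). pose proof W2 as [[_ J2] _].
  split; [apply W_circ; auto|]. split; [apply Bis_circ; auto|].
  apply sim_trans with y; [apply sim_circ_l|apply sim_circ_r]; auto.
Qed.

Lemma Eq_C (M : SeqStr) (HM : Seq_model M) x x' v : EqS M x x' -> ent M v x -> exists w, ent M w x' /\ EqS M v w.
Proof.
  intros [R [[K F] [B S]]] Hv.
  destruct (F v R) as [S0 [_ HS0]].
  set (P := fun a : M => exists w, ent M w a /\ sim M R v w).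
  assert (HP : forall p q, inR M p q R -> P p -> P q).
  { intros p q H [w [Hw Hs]]. destruct (B p q H w Hw) as [w' [Hw' Hs']].
    exists w'. split; auto. eapply sim_trans; eauto. }
  assert (Hx : P x). { exists v. split; auto. apply sim_refl. }
  assert (HSat : SatR M R (sturn M S0 x)).
  { intros p q H. rewrite !ent_turn, !HS0 by exact HM.
    assert (Pp : ent M p S0 \/ p = x -> P p) by (intros [h| ->]; [apply HS0 in h; tauto| auto]).
    assert (Pq : ent M q S0 \/ q = x -> P q) by (intros [h| ->]; [apply HS0 in h; tauto| auto]).
    rewrite HS0 in Pp, Pq.
    split; intros h; left; split.
    - exists p. apply inR_sym; auto.
    - apply (HP p q H). auto.
    - exists q. auto.
    - apply (HP q p (inR_sym _ _ _ _ H)). auto. }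
  pose proof (S _ HSat) as Hxx. rewrite !ent_turn in Hxx by exact HM.
  assert (Px' : P x').
  { destruct (proj1 Hxx (or_intror eq_refl)) as [h| ->]; auto. apply HS0 in h. apply h. }
  destruct Px' as [w [Hw Hs]]. exists w. split; auto. exists R. split; [split; auto|]. split; auto.
Qed.

Lemma Psi_e (M : SeqStr) (HM : Seq_model M) : Psi M (se M).
Proof.
  intros y _. exists (se M). split; [apply W_e; auto|]. split; [apply Bis_e; auto|].
  intros v h. destruct (ent_e M HM v h).
Qed.

Lemma Psi_turn (M : SeqStr) (HM : Seq_model M) x b : Psi M x -> Psi M (sturn M x b).
Proof.
  intros HP y H.
  destruct (HP y) as [R1 [W1 [B1 S1]]].
  { intros v Hv. apply H. apply ent_turn; auto. }
  destruct (H b) as [wb [Hwb [R2 [W2 [B2 S2]]]]]. { apply ent_turn; auto. }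
  pose proof W2 as [[_ J2] _].
  exists (scirc M R1 R2). split; [apply W_circ; auto|]. split; [apply Bis_circ; auto|].
  intros v Hv. apply ent_turn in Hv; [|exact HM]. destruct Hv as [Hv| ->].
  - destruct (S1 v Hv) as [w [Hw Hs]]. exists w. split; auto. apply sim_circ_l; auto.
  - exists wb. split; auto. apply sim_circ_r; auto.
Qed.

Lemma D_e (M : SeqStr) (HM : Seq_model M) : Dm M (se M).
Proof.
  exists (sturn M (se M) (se M)). split; [apply K_turn, K_e; auto|].
  split; [apply ent_turn; auto|].
  intros a Ha. apply ent_turn in Ha; [|exact HM]. destruct Ha as [Ha| ->].
  - destruct (ent_e M HM a Ha).
  - split; [apply Psi_e; auto|]. intros u h. destruct (ent_e M HM u h).
Qed.

Lemma D_turn (M : SeqStr) (HM : Seq_model M) x y : Dm M x -> Dm M y -> Dm M (sturn M x y).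
Proof.
  intros [T1 [K1 [E1 H1]]] [T2 [K2 [E2 H2]]].
  pose proof K2 as [_ J2].
  exists (sturn M (scirc M T1 T2) (sturn M x y)).
  split; [apply K_turn, K_circ; auto|]. split; [apply ent_turn; auto|].
  assert (sub : forall u, ent M u T1 \/ ent M u T2 -> ent M u (sturn M (scirc M T1 T2) (sturn M x y))).
  { intros u h. apply ent_turn; auto. left. apply J2. auto. }
  intros a Ha. apply ent_turn in Ha; [|exact HM]. destruct Ha as [Ha| ->].
  - apply J2 in Ha. destruct Ha as [Ha|Ha].
    + destruct (H1 a Ha) as [P U]. split; auto.
    + destruct (H2 a Ha) as [P U]. split; auto.
  - split.
    + apply Psi_turn; auto. apply (H1 x E1).
    + intros u Hu. apply ent_turn in Hu; [|exact HM]. destruct Hu as [Hu| ->]; apply sub.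
      * left. apply (H1 x E1); auto.
      * right; auto.
Qed.

Lemma D_ent (M : SeqStr) x v : Dm M x -> ent M v x -> Dm M v.
Proof.
  intros [T [K [E H]]] Hv. exists T. split; auto. split; auto. apply (H x E); auto.
Qed.

Lemma D_Psi (M : SeqStr) x : Dm M x -> Psi M x.
Proof. intros [T [K [E H]]]. apply (H x E). Qed.

Lemma Ext (M : SeqStr) (HM : Seq_model M) x y : Dm M x -> Dm M y ->
  (forall z, Dm M z -> (InS M z x <-> InS M z y)) -> EqS M x y.
Proof.
  intros Dx Dy H.
  destruct (D_Psi M x Dx y) as [R1 [W1 [B1 S1]]].
  { intros v Hv. destruct (proj1 (H v (D_ent M x v Dx Hv))) as [w [Hw He]].
    - exists v. split; auto. apply Eq_refl; auto.
    - exists w. auto. }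
  destruct (D_Psi M y Dy x) as [R2 [W2 [B2 S2]]].
  { intros v Hv. destruct (proj2 (H v (D_ent M y v Dy Hv))) as [w [Hw He]].
    - exists v. split; auto. apply Eq_refl; auto.
    - exists w. auto. }
  pose proof W2 as [[_ J2] _].
  set (R := sturn M (scirc M R1 R2) (pr M x y)).
  assert (m1 : forall p q, inR M p q R1 -> inR M p q R).
  { intros p q h. apply inR_turn; auto. left. apply inR_circ; auto. }
  assert (m2 : forall p q, inR M p q R2 -> inR M p q R).
  { intros p q h. apply inR_turn; auto. left. apply inR_circ; auto. }
  assert (mxy : inR M x y R). { apply inR_turn; auto. }
  exists R. split; [apply W_turn, W_circ; auto|]. split.
  - intros p q Hpq v Hv. apply inR_turn in Hpq; [|exact HM].
    destruct Hpq as [Hpq|[Hpq|Hpq]].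
    + apply inR_circ in Hpq; [|exact J2]. destruct Hpq as [Hpq|Hpq].
      * destruct (B1 p q Hpq v Hv) as [w [Hw Hs]]. exists w. split; auto. exact (sim_mono M _ R v w m1 Hs).
      * destruct (B2 p q Hpq v Hv) as [w [Hw Hs]]. exists w. split; auto. exact (sim_mono M _ R v w m2 Hs).
    + apply pr_inj in Hpq; [|exact HM]. destruct Hpq as [<- <-].
      destruct (S1 v Hv) as [w [Hw Hs]]. exists w. split; auto. exact (sim_mono M _ R v w m1 Hs).
    + apply pr_inj in Hpq; [|exact HM]. destruct Hpq as [<- <-].
      destruct (S2 v Hv) as [w [Hw Hs]]. exists w. split; auto. exact (sim_mono M _ R v w m2 Hs).
  - apply sim_inR; auto.
Qed.

Lemma sem_holds (M : SeqStr) (HM : Seq_model M) : AST_EXT_holds (Dm M) (EqS M) (InS M).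
Proof.
  split; [exists (se M); apply D_e; auto|].
  split; [intros; apply Eq_refl; auto|].
  split; [intros; apply Eq_sym; auto|].
  split; [intros; eapply Eq_trans; eauto|].
  split.
  { intros x x' y y' _ _ _ _ Hx Hy [v [Hv He]].
    destruct (Eq_C M HM y y' v Hy Hv) as [w [Hw Hw']]. exists w. split; auto.
    eapply Eq_trans; eauto. eapply Eq_trans; eauto. apply Eq_sym; auto. }
  split.
  { exists (se M). split; [apply D_e; auto|]. intros x _ [v [Hv _]]. apply (ent_e M HM v Hv). }
  split.
  { intros x y Dx Dy. exists (sturn M x y). split; [apply D_turn; auto|].
    intros u _. unfold InS. setoid_rewrite ent_turn; [|exact HM]. split.
    - intros [v [[Hv| ->] He]]; [left; exists v; auto| right; auto].
    - intros [[v [Hv He]]|He]; [exists v; auto| exists y; auto]. }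
  intros x y Dx Dy H. apply Ext; auto.
Qed.

Fixpoint lift (t : term) : term :=
  match t with
  | tvar n => tvar (S n)
  | te => te
  | tturn a b => tturn (lift a) (lift b)
  | tcirc a b => tcirc (lift a) (lift b)
  end.

Lemma eval_lift M rho a t : eval M (scons a rho) (lift t) = eval M rho t.
Proof. induction t; simpl; congruence. Qed.

Definition fiff p q := fand (fimp p q) (fimp q p).
Lemma sat_iff M rho p q : sat M rho (fiff p q) <-> (sat M rho p <-> sat M rho q).
Proof. simpl. tauto. Qed.

Definition f_ent u x := fex (fex (feq (lift (lift x)) (tcirc (tturn (tvar 1) (lift (lift u))) (tvar 0)))).
Definition L2 t := lift (lift t).
Definition L3 t := lift (L2 t).
Definition L4 t := lift (L3 t).
Definition tpr a b := tturn (tturn te a) b.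
Definition f_inR p q R := for_ (f_ent (tpr p q) R) (f_ent (tpr q p) R).
Definition f_comp a R := fex (f_inR (lift a) (tvar 0) (lift R)).
Definition f_Isc y := fall (fall (feq (tcirc (tcirc (tvar 1) (tvar 0)) (L2 y)) (tcirc (tvar 1) (tcirc (tvar 0) (L2 y))))).
Definition f_Jsc y := fall (fall (fiff (f_ent (tvar 0) (tcirc (tvar 1) (L2 y))) (for_ (f_ent (tvar 0) (tvar 1)) (f_ent (tvar 0) (L2 y))))).
Definition f_K y := fand (f_Isc y) (f_Jsc y).
Definition f_Sat R S := fall (fall (fimp (f_inR (tvar 1) (tvar 0) (L2 R)) (fiff (f_ent (tvar 1) (L2 S)) (f_ent (tvar 0) (L2 S))))).
Definition f_sim R a b := fall (fimp (f_Sat (lift R) (tvar 0)) (fiff (f_ent (lift a) (tvar 0)) (f_ent (lift b) (tvar 0)))).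
Definition f_Bis R := fall (fall (fimp (f_inR (tvar 1) (tvar 0) (L2 R))
  (fall (fimp (f_ent (tvar 0) (tvar 2)) (fex (fand (f_ent (tvar 0) (tvar 2)) (f_sim (L4 R) (tvar 1) (tvar 0)))))))).
Definition f_Fc R := fall (fall (fex (fand (f_K (tvar 0)) (fall (fiff (f_ent (tvar 0) (tvar 1))
  (fand (f_comp (tvar 0) (L4 R)) (fex (fand (f_ent (tvar 0) (tvar 1)) (f_sim (tvar 3) (tvar 4) (tvar 0)))))))))).
Definition f_W R := fand (f_K R) (f_Fc R).
Definition f_Eq x y := fex (fand (f_W (tvar 0)) (fand (f_Bis (tvar 0)) (f_sim (tvar 0) (lift x) (lift y)))).
Definition f_Psi x := fall (fimp
  (fall (fimp (f_ent (tvar 0) (L2 x)) (fex (fand (f_ent (tvar 0) (tvar 2)) (f_Eq (tvar 1) (tvar 0))))))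
  (fex (fand (f_W (tvar 0)) (fand (f_Bis (tvar 0)) (fall (fimp (f_ent (tvar 0) (L3 x))
     (fex (fand (f_ent (tvar 0) (tvar 3)) (f_sim (tvar 2) (tvar 1) (tvar 0)))))))))).
Definition f_D x := fex (fand (f_K (tvar 0)) (fand (f_ent (lift x) (tvar 0))
  (fall (fimp (f_ent (tvar 0) (tvar 1)) (fand (f_Psi (tvar 0)) (fall (fimp (f_ent (tvar 0) (tvar 1)) (f_ent (tvar 0) (tvar 2))))))))).
Definition f_In u x := fex (fand (f_ent (tvar 0) (lift x)) (f_Eq (lift u) (tvar 0))).

Lemma D_ok (M : SeqStr) (x : M) : sat M (env2 M x x) (f_D (tvar 0)) <-> Dm M x.
Proof. split; intro H; exact H. Qed.
Lemma Eq_ok (M : SeqStr) (x y : M) : sat M (env2 M x y) (f_Eq (tvar 0) (tvar 1)) <-> EqS M x y.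
Proof. split; intro H; exact H. Qed.
Lemma In_ok (M : SeqStr) (x y : M) : sat M (env2 M x y) (f_In (tvar 0) (tvar 1)) <-> InS M x y.
Proof. split; intro H; exact H. Qed.

Theorem theorem8 :
  AST_EXT_interpretable_in SeqPlus_model /\ AST_EXT_interpretable_in Seq_model.
Proof.
  assert (H : AST_EXT_interpretable_in Seq_model).
  { exists (f_D (tvar 0)), (f_Eq (tvar 0) (tvar 1)), (f_In (tvar 0) (tvar 1)).
    intros M HM. exact (sem_holds M HM). }
  split; [|exact H].
  destruct H as [d [q [i H]]]. exists d, q, i. intros M HM. apply H. apply HM.
Qed.
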